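(* Let $\ell\ge2$, $r_0,\dots,r_\ell\ge1$ integers, $d_0,\dots,d_\ell$ integers with $d_V=\sum_kd_k=0$, $\mathbf{g}\ge1$ an integer. For real $c>\max_k\mu_k$ let $(a_0,a_2,\dots,a_\ell)$ be the unique solution of the linear system in the context, and put $\Sigma_1(c)=\sum_{j=2}^\ell a_jr_j$, $\Sigma_2(c)=\sum_{j=2}^\ell a_jd_j$. Then, as $c\to+\infty$, $\Sigma_1$ and $\Sigma_2$ have expansions $\Sigma_1=\sum_{i\ge1}u_ic^{-i}$, $\Sigma_2=\sum_{i\ge1}v_ic^{-i}$, and with $\mu_{01}=\frac{d_0+d_1}{r_0+r_1}$ the coefficients satisfy $u_1=4r_V^2\mu_{01}$, $(r_V+2)u_2-2\mu_{01}u_1-2v_1=4(r_V+2)(\mathbf{g}-1)r_V\mu_{01}$, and for all $i\ge1$: $(r_V+2)u_{i+2}-2\mu_{01}u_{i+1}-2v_{i+1}+\frac{r_V+2}{r_V+1}\mu_{01}v_i=0$.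
   Context: $\mu_k=d_k/r_k$, $r_V=\sum_kr_k$, $\pi_R=\prod_k(r_k-1)!$. For $1\le j\ne k\le\ell$: $\alpha_0=\frac{\pi_R}{r_V!}(cr_V-d_V)$, $\alpha_j=\frac{\pi_R}{(r_V+1)!}r_j(c(r_V+1)-d_V-\mu_j)$, $\alpha_{jk}=\frac{\pi_R}{(r_V+2)!}r_jr_k(c(r_V+2)-d_V-\mu_j-\mu_k)$, $\alpha_{jj}=\frac{\pi_R}{(r_V+2)!}r_j(r_j+1)(c(r_V+2)-d_V-2\mu_j)$, $\beta_0=\frac{\pi_R}{(r_V-1)!}((r_V-1)r_Vc+2(1-\mathbf{g})-(r_V-1)d_V)$, $\beta_j=\frac{\pi_Rr_j}{r_V!}(r_V(r_V-1)c+2(1-\mathbf{g})-d_V(r_V-2)-r_V\mu_j)$. The linear system for $(a_0,a_2,\dots,a_\ell)$ is: $a_0\alpha_k+\sum_{j=2}^\ell a_j\alpha_{jk}=2\beta_k$ for $k=2,\dots,\ell$, and $a_0\alpha_0+\sum_{j=2}^\ell a_j\alpha_j=2\beta_0$. *)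

(* Defs.v *)
From HB Require Import structures.
From mathcomp Require Import all_boot all_order all_algebra.
From mathcomp Require Import all_classical all_reals all_analysis.
Set Implicit Arguments. Unset Strict Implicit. Unset Printing Implicit Defensive.
Import Order.TTheory GRing.Theory Num.Theory.
Import numFieldNormedType.Exports.
Local Open Scope classical_set_scope.
Local Open Scope ring_scope.

(* Indices k range over 0..l; data r d : nat -> _ (only values at k <= l matter). *)
Section Defs.
Variable (R : realType) (l : nat) (r : nat -> nat) (d : nat -> int) (g : nat).

Definition rV : nat := (\sum_(k < l.+1) r k)%N.
Definition dV : int := \sum_(k < l.+1) d k.
Definition mu (k : nat) : R := (d k)%:~R / (r k)%:R.
Definition piR : R := (\prod_(k < l.+1) ((r k).-1)`!)%:R.

Definition alpha0 (c : R) : R :=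
  piR / (rV`!)%:R * (c * rV%:R - dV%:~R).
Definition alpha1 (c : R) (j : nat) : R :=
  piR / ((rV.+1)`!)%:R * (r j)%:R * (c * (rV.+1)%:R - dV%:~R - mu j).
Definition alpha2 (c : R) (j k : nat) : R :=
  if j == k then
    piR / ((rV.+2)`!)%:R * (r j)%:R * ((r j).+1)%:R
      * (c * (rV.+2)%:R - dV%:~R - 2 * mu j)
  else
    piR / ((rV.+2)`!)%:R * (r j)%:R * (r k)%:R
      * (c * (rV.+2)%:R - dV%:~R - mu j - mu k).
Definition beta0 (c : R) : R :=
  piR / ((rV.-1)`!)%:R *
    ((rV.-1)%:R * rV%:R * c + 2 * (1 - g%:R) - (rV.-1)%:R * dV%:~R).
Definition beta1 (c : R) (j : nat) : R :=
  piR * (r j)%:R / (rV`!)%:R *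
    (rV%:R * (rV.-1)%:R * c + 2 * (1 - g%:R) - dV%:~R * (rV%:R - 2) - rV%:R * mu j).

Definition is_solution (c : R) (a0 : R) (a : nat -> R) : Prop :=
  (forall k, (2 <= k <= l)%N ->
     a0 * alpha1 c k + \sum_(2 <= j < l.+1) a j * alpha2 c j k = 2 * beta1 c k)
  /\ a0 * alpha0 c + \sum_(2 <= j < l.+1) a j * alpha1 c j = 2 * beta0 c.

Definition solution_unique (c : R) : Prop :=
  forall a0 a a0' a', is_solution c a0 a -> is_solution c a0' a' ->
    a0 = a0' /\ forall j, (2 <= j <= l)%N -> a j = a' j.

Definition asymp_expansion (f : R -> R) (u : nat -> R) : Prop :=
  forall N : nat,
    (c ^+ N * (f c - \sum_(1 <= i < N.+1) u i / c ^+ i)) @[c --> +oo] --> (0 : R).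

End Defs.

(* Main.v *)
Require Import Defs.
From HB Require Import structures.
From mathcomp Require Import all_boot all_order all_algebra.
From mathcomp Require Import all_classical all_reals all_analysis.
Import Order.TTheory GRing.Theory Num.Theory.
Import numFieldNormedType.Exports.
From mathcomp Require Import ring lra zify.
Set Implicit Arguments. Unset Strict Implicit. Unset Printing Implicit Defensive.
Local Open Scope classical_set_scope.
Local Open Scope ring_scope.


Section Ser.
Variable R : realType.
Implicit Types p q : {poly R}.

Fixpoint Wp p q (n : nat) : {poly R} :=
  match n with
  | 0 => (q`_0 / p`_0)%:P
  | n'.+1 => Wp p q n' + ((q - p * Wp p q n')`_n / p`_0) *: 'X^n
  end.
Definition ser p q j := (Wp p q j)`_j.

Definition eqm (n : nat) (A B : {poly R}) := forall j, (j <= n)%N -> A`_j = B`_j.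

Lemma Wp_high p q n j : (n < j)%N -> (Wp p q n)`_j = 0.
Proof.
elim: n j => [|n IH] j /= hj.
  by rewrite coefC; case: j hj.
rewrite coefD coefZ coefXn IH ?(ltn_trans _ hj) //.
by rewrite (gtn_eqF hj) mulr0 addr0.
Qed.

Lemma Wp_stable p q n m j : (j <= n)%N -> (n <= m)%N -> (Wp p q m)`_j = (Wp p q n)`_j.
Proof.
move=> hj; elim: m => [|m IH] hm.
  by move: hm; rewrite leqn0 => /eqP->.
case: (leqP n m) => hnm.
  by rewrite /= coefD coefZ coefXn IH // (ltn_eqF (leq_ltn_trans hj (leq_ltn_trans hnm (ltnSn m)))) mulr0 addr0.
have -> : n = m.+1 by apply/eqP; rewrite eqn_leq hm hnm.
by [].
Qed.

Lemma Wp_eqm p q n : p`_0 != 0 -> eqm n (p * Wp p q n) q.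
Proof.
move=> p0; elim: n => [|n IH] j hj /=.
  move: hj; rewrite leqn0 => /eqP->.
  by rewrite coefM big_ord1 subnn coefC /= mulrC divfK.
rewrite mulrDr coefD -scalerAr coefZ coefMXn.
case: (ltnP j n.+1) => hjn.
  by rewrite mulr0 addr0 IH.
have -> : j = n.+1 by apply/eqP; rewrite eqn_leq hj hjn.
rewrite subnn divfK // coefB.
ring.
Qed.

Lemma Wp_poly p q n : Wp p q n = \poly_(i < n.+1) ser p q i.
Proof.
apply/polyP => j; rewrite coef_poly; case: ltnP => hj.
  by rewrite /ser (Wp_stable _ _ (leqnn j)).
by rewrite Wp_high.
Qed.

Lemma eqm_mull n C A B : eqm n A B -> eqm n (C * A) (C * B).
Proof.
move=> h j hj; rewrite !coefM; apply: eq_bigr => i _; rewrite h //.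
exact: leq_trans (leq_subr _ _) hj.
Qed.

Lemma eqm_cancel n p L : p`_0 != 0 -> (forall j, (j <= n)%N -> (p * L)`_j = 0) ->
  forall j, (j <= n)%N -> L`_j = 0.
Proof.
move=> p0 h j; elim/ltn_ind: j => j IH hj.
have := h j hj; rewrite coefM big_ord_recl subn0 /=.
rewrite big1 ?addr0; first by move/eqP; rewrite mulf_eq0 (negPf p0) /= => /eqP.
move=> i _; rewrite IH ?mulr0 //.
  by have := ltn_ord i; rewrite /bump /=; lia.
  by apply: leq_trans (leq_subr _ _) hj.
Qed.

End Ser.

Section Exp.
Variable R : realType.

Definition cabs (P : {poly R}) : R := \sum_(i < size P) `|P`_i|.

Lemma cabs_ge0 P : 0 <= cabs P.
Proof. by apply: sumr_ge0 => i _. Qed.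

Lemma horner_small (P : {poly R}) m t : (forall i, (i < m)%N -> P`_i = 0) ->
  0 <= t -> t <= 1 -> `|P.[t]| <= cabs P * t ^+ m.
Proof.
move=> hP t0 t1; rewrite horner_coef /cabs mulr_suml.
apply: le_trans (ler_norm_sum _ _ _) _; apply: ler_sum => i _.
case: (ltnP i m) => him; first by rewrite hP // mul0r normr0 mul0r.
rewrite normrM normrX (ger0_norm t0); apply: ler_wpM2l => //.
exact: ler_wiXn2l.
Qed.

Lemma expansion (f : R -> R) (p q : {poly R}) M : p`_0 != 0 ->
  (forall c, M < c -> p.[c^-1] * f c = q.[c^-1]) ->
  forall N, (c ^+ N * (f c - (Wp p q N).[c^-1])) @[c --> +oo] --> (0 : R).
Proof.
move=> p0 hf N.
set Rem := q - p * Wp p q N.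
have hRem : forall i, (i < N.+1)%N -> Rem`_i = 0.
  by move=> i hi; rewrite /Rem coefB Wp_eqm // subrr.
set P' := p - (p`_0)%:P.
have hP' : forall i, (i < 1)%N -> P'`_i = 0.
  by move=> [|i] // _; rewrite /P' coefB coefC subrr.
set a := `|p`_0|.
have a0 : 0 < a by rewrite normr_gt0.
set K1 := cabs Rem; set Kp := cabs P'.
have K10 : 0 <= K1 := cabs_ge0 _.
have Kp0 : 0 <= Kp := cabs_ge0 _.
apply/cvgr0Pnorm_le => eps eps0.
exists (1 + `|M| + 2 * Kp / a + 2 * K1 / (a * eps)); split; first by rewrite num_real.
move=> c hc.
have hKpa : 0 <= 2 * Kp / a by apply: divr_ge0 => //; lra.
have hK1a : 0 <= 2 * K1 / (a * eps) by apply: divr_ge0; [lra| apply: mulr_ge0; lra].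
have hM : M <= `|M| := ler_norm M.
have hM0 : 0 <= `|M| := normr_ge0 M.
have c1 : 1 < c by lra.
have c0 : 0 < c by lra.
have cM : M < c by lra.
have cKp : 2 * Kp / a <= c by lra.
have cK1 : 2 * K1 / (a * eps) <= c by lra.
set t := c^-1.
have t0 : 0 < t by rewrite invr_gt0.
have t1 : t <= 1 by rewrite invf_le1 //; lra.
have ct : c * t = 1 by rewrite /t divff //; lra.
have hp : a / 2 <= `|p.[t]|.
  have h1 := horner_small hP' (ltW t0) t1.
  have e : P'.[t] = p.[t] - p`_0 by rewrite /P' hornerD hornerN hornerC.
  rewrite e expr1 in h1.
  have h2 := lerB_dist (p`_0) p.[t].
  have : Kp * t <= a / 2.
    rewrite ler_pdivrMr // in cKp.
    have h := ler_wpM2r (ltW t0) cKp.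
    have e2 : c * a * t = a by rewrite mulrAC ct mul1r.
    lra.
  rewrite -/a distrC in h2; move=> hh; rewrite -/Kp in h1; lra.
have pt0 : p.[t] != 0 by rewrite -normr_gt0; lra.
have eq1 : f c - (Wp p q N).[t] = Rem.[t] / p.[t].
  apply: (mulIf pt0); rewrite divfK // /Rem hornerD hornerN hornerM -(hf c cM).
  ring.
rewrite eq1.
have h3 := horner_small hRem (ltW t0) t1.
rewrite normrM normrM normrX (gtr0_norm c0) -/K1.
rewrite exprS in h3.
have ctN : c ^+ N * t ^+ N = 1 by rewrite -exprMn ct expr1n.
have : `|Rem.[t] / p.[t]| <= K1 * (t * t ^+ N) / (a / 2).
  rewrite normrM normrV ?unitfE //.
  apply: ler_pM => //. all: try (by rewrite -/K1 in h3).
  rewrite lef_pV2 ?posrE //; lra.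
rewrite normrM normrV ?unitfE // => h4.
apply: le_trans (ler_wpM2l (exprn_ge0 _ (ltW c0)) h4) _.
have -> : c ^+ N * (K1 * (t * t ^+ N) / (a / 2)) = (c ^+ N * t ^+ N) * (2 * K1 * t / a).
  by field; lra.
rewrite ctN mul1r.
rewrite ler_pdivrMr // in cK1; last by apply: mulr_gt0.
have h5 := ler_wpM2r (ltW t0) cK1.
have e3 : c * (a * eps) * t = a * eps by rewrite mulrAC ct mul1r.
rewrite ler_pdivrMr //; lra.
Qed.

End Exp.

Section RI.
Variable R : realType.

Definition RI (z : bool) (f : R -> R) := exists (p q : {poly R}),
  p`_0 != 0 /\ (z -> q`_0 = 0) /\ exists M, forall c, M < c -> p.[c^-1] * f c = q.[c^-1].

Lemma RI_ext z f g M : RI z f -> (forall c, M < c -> f c = g c) -> RI z g.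
Proof.
move=> [p [q [p0 [hz [M1 h]]]]] e; exists p, q; split=> //; split=> //.
exists (`|M| + `|M1|) => c hc.
have := ler_norm M; have := ler_norm M1; have := normr_ge0 M; have := normr_ge0 M1 => *.
by rewrite -e ?h //; lra.
Qed.

Lemma RI_cst a : RI false (fun _ => a).
Proof.
exists 1%:P, a%:P; split; first by rewrite coefC oner_eq0.
by split=> //; exists 0 => c _; rewrite !hornerC mul1r.
Qed.

Lemma RI_invc : RI true (fun c => c^-1).
Proof.
exists 1%:P, 'X; split; first by rewrite coefC oner_eq0.
by split; [rewrite coefX|exists 0 => c _; rewrite hornerX hornerC mul1r].
Qed.

Lemma RI_lin A B : 1 <= A -> RI true (fun c => (c * A - B)^-1).
Proof.
move=> A1; exists (A%:P - B *: 'X), 'X; split.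
  by rewrite coefB coefC coefZ coefX mulr0 subr0; apply/eqP; lra.
split; first by rewrite coefX.
exists (`|B| + 1) => c hc.
have := ler_norm B; have := normr_ge0 B => *.
have c0 : c != 0 by apply/eqP; lra.
have d0 : c * A - B != 0 by apply/eqP; nra.
rewrite hornerD hornerN hornerC hornerZ hornerX; field.
by rewrite c0 d0.
Qed.

Lemma RI_add z f g : RI z f -> RI z g -> RI z (fun c => f c + g c).
Proof.
move=> [p1 [q1 [p10 [hz1 [M1 h1]]]]] [p2 [q2 [p20 [hz2 [M2 h2]]]]].
exists (p1 * p2), (p2 * q1 + p1 * q2); split; first by rewrite coef0M mulf_neq0.
split; first by move=> hz; rewrite coefD !coef0M hz1 // hz2 // !mulr0 addr0.
exists (`|M1| + `|M2|) => c hc.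
have := ler_norm M1; have := ler_norm M2; have := normr_ge0 M1; have := normr_ge0 M2 => *.
rewrite hornerD !hornerM -h1 ?h2; try lra.
rewrite -h2; last lra. ring.
Qed.

Lemma RI_mul z1 z2 f g : RI z1 f -> RI z2 g -> RI (z1 || z2) (fun c => f c * g c).
Proof.
move=> [p1 [q1 [p10 [hz1 [M1 h1]]]]] [p2 [q2 [p20 [hz2 [M2 h2]]]]].
exists (p1 * p2), (q1 * q2); split; first by rewrite coef0M mulf_neq0.
split; first by case/orP => hz; rewrite coef0M; [rewrite hz1 // mul0r | rewrite hz2 // mulr0].
exists (`|M1| + `|M2|) => c hc.
have := ler_norm M1; have := ler_norm M2; have := normr_ge0 M1; have := normr_ge0 M2 => *.
rewrite !hornerM -h1; last lra. rewrite -h2; last lra. ring.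
Qed.

Lemma RI_sum z (s : seq nat) (F : nat -> R -> R) : (forall j, RI z (F j)) ->
  RI z (fun c => \sum_(j <- s) F j c).
Proof.
move=> hF; elim: s => [|j s IH].
  exists 1%:P, 0; split; first by rewrite coefC oner_eq0.
  split; first by rewrite coefC.
  by exists 0 => c _; rewrite big_nil horner0 mulr0.
apply: (@RI_ext _ _ _ 0 (RI_add (hF j) IH)) => c _.
by rewrite big_cons.
Qed.

Lemma RI_solve z H k Y M : RI true H -> RI z k ->
  (forall c, M < c -> Y c * (1 + H c) = k c) -> RI z Y.
Proof.
move=> [p1 [q1 [p10 [hz1 [M1 h1]]]]] [p2 [q2 [p20 [hz2 [M2 h2]]]]] hY.
exists (p2 * (p1 + q1)), (p1 * q2); split.
  by rewrite coef0M coefD hz1 // addr0 mulf_neq0.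
split; first by move=> hz; rewrite coef0M hz2 // mulr0.
exists (`|M| + `|M1| + `|M2|) => c hc.
have := ler_norm M1; have := ler_norm M2; have := normr_ge0 M1; have := normr_ge0 M2 => *.
have := ler_norm M; have := normr_ge0 M => *.
rewrite !hornerM hornerD -h1; last lra. rewrite -h2; last lra.
rewrite -(hY c); last lra. ring.
Qed.

Lemma poly_eq0_near (Z : {poly R}) M : (forall c, M < c -> Z.[c^-1] = 0) -> Z = 0.
Proof.
move=> h; set M0 := `|M| + 1.
have hM : M < M0 by have := ler_norm M; rewrite /M0; lra.
have M00 : 0 < M0 by have := normr_ge0 M; rewrite /M0; lra.
apply: (@roots_geq_poly_eq0 _ Z [seq (M0 + i%:R)^-1 | i <- iota 0 (size Z)]).
- apply/allP => x /mapP [i _ ->]; rewrite /root h //.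
  have := ler0n R i; lra.
- rewrite map_inj_uniq ?iota_uniq // => i j /invr_inj /addrI /eqP.
  by rewrite eqr_nat => /eqP.
- by rewrite size_map size_iota.
Qed.

Lemma coeff_rel (f1 f2 : R -> R) (p1 q1 p2 q2 a b e : {poly R}) M1 M2 M :
  p1`_0 != 0 -> p2`_0 != 0 ->
  (forall c, M1 < c -> p1.[c^-1] * f1 c = q1.[c^-1]) ->
  (forall c, M2 < c -> p2.[c^-1] * f2 c = q2.[c^-1]) ->
  (forall c, M < c -> a.[c^-1] * f1 c + b.[c^-1] * f2 c = e.[c^-1]) ->
  forall n j, (j <= n)%N -> (a * Wp p1 q1 n + b * Wp p2 q2 n - e)`_j = 0.
Proof.
move=> p10 p20 h1 h2 he n.
set Z := p2 * a * q1 + p1 * b * q2 - p1 * p2 * e.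
have Z0 : Z = 0.
  apply: (@poly_eq0_near _ (`|M| + `|M1| + `|M2|)) => c hc.
  have := ler_norm M1; have := ler_norm M2; have := normr_ge0 M1; have := normr_ge0 M2 => *.
  have := ler_norm M; have := normr_ge0 M => *.
  rewrite /Z !(hornerD, hornerN, hornerM) -h1; last lra. rewrite -h2; last lra.
  have := he c; rewrite -/(c^-1) => he'.
  have -> : p2.[c^-1] * a.[c^-1] * (p1.[c^-1] * f1 c) + p1.[c^-1] * b.[c^-1] * (p2.[c^-1] * f2 c) -
     p1.[c^-1] * p2.[c^-1] * e.[c^-1] = p1.[c^-1] * p2.[c^-1] * (a.[c^-1] * f1 c + b.[c^-1] * f2 c - e.[c^-1]) by ring.
  by rewrite he' ?subrr ?mulr0 //; lra.
apply: (@eqm_cancel _ n (p1 * p2)); first by rewrite coef0M mulf_neq0.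
move=> j hj.
have -> : p1 * p2 * (a * Wp p1 q1 n + b * Wp p2 q2 n - e) =
   p2 * a * (p1 * Wp p1 q1 n) + p1 * b * (p2 * Wp p2 q2 n) - p1 * p2 * e by ring.
rewrite coefB coefD (eqm_mull (p2 * a) (@Wp_eqm _ p1 q1 n p10)) //.
rewrite (eqm_mull (p1 * b) (@Wp_eqm _ p2 q2 n p20)) //.
by rewrite -coefD -coefB -/Z Z0 coef0.
Qed.

End RI.

Lemma eq_by (R : comRingType) (x y z w k : R) : x - y = k * (z - w) -> z = w -> x = y.
Proof. by move=> h e; apply/eqP; rewrite -subr_eq0 h e subrr mulr0. Qed.

Lemma sum_lin (R : comRingType) (s : seq nat) (T U V : nat -> R) al be ga :
  \sum_(j <- s) (al * T j + be * U j + ga * V j) =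
  al * \sum_(j <- s) T j + be * \sum_(j <- s) U j + ga * \sum_(j <- s) V j.
Proof. by rewrite !big_split /= !mulr_sumr. Qed.

Section Core.
Variables (R : realType) (l : nat) (r : nat -> nat) (d : nat -> int) (g : nat).
Hypotheses (hl : (2 <= l)%N) (hr : forall k, (k <= l)%N -> (1 <= r k)%N) (hd : dV l d = 0).

Let n := rV l r.
Let N : R := n%:R.
Let P : R := piR R l r.
Let F : R := (n.-1)`!%:R.
Let mk k : R := mu R r d k.

Lemma n_split : n = (r 0 + r 1 + \sum_(2 <= k < l.+1) r k)%N.
Proof.
rewrite /n /rV -(big_mkord xpredT r) big_ltn // big_ltn ?addnA //; lia.
Qed.

Lemma d_split : (d 0)%:~R + (d 1)%:~R + \sum_(2 <= k < l.+1) (d k)%:~R = 0 :> R.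
Proof.
have := hd; rewrite /dV -(big_mkord xpredT d) big_ltn // big_ltn; last lia.
move=> /(congr1 (fun z : int => z%:~R : R)); rewrite !intrD -mulrz_sumr addrA => ->.
by [].
Qed.

Lemma r_pos k : (k <= l)%N -> 0 < (r k)%:R :> R.
Proof. by move=> hk; rewrite ltr0n; apply: hr. Qed.

Lemma n_pos : (0 < n)%N.
Proof. by rewrite n_split; have := hr (leq0n l); lia. Qed.

Lemma N_pos : 0 < N.
Proof. by rewrite /N ltr0n n_pos. Qed.

Lemma Nn0 : (n%:R : R) != 0.
Proof. by rewrite lt0r_neq0 // N_pos. Qed.
Lemma Nn1 : (n%:R + 1 : R) != 0.
Proof. have := N_pos; rewrite /N => h; apply/eqP; lra. Qed.
Lemma Nn2 : (n%:R + 2 : R) != 0.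
Proof. have := N_pos; rewrite /N => h; apply/eqP; lra. Qed.

Lemma P_neq0 : P != 0.
Proof. by rewrite /P /piR pnatr_eq0 -lt0n prodn_gt0 // => i; exact: fact_gt0. Qed.

Lemma F_neq0 : F != 0.
Proof. by rewrite /F pnatr_eq0 -lt0n fact_gt0. Qed.

Lemma fE0 : (n`!)%:R = N * F :> R.
Proof.
by rewrite /N /F -natrM; congr (_%:R); rewrite -{1}(prednK n_pos) factS prednK // n_pos.
Qed.

Lemma fE1 : ((n.+1)`!)%:R = (N + 1) * (N * F) :> R.
Proof. by rewrite factS natrM fE0 /N -natr1. Qed.

Lemma fE2 : ((n.+2)`!)%:R = (N + 2) * ((N + 1) * (N * F)) :> R.
Proof. by rewrite factS natrM fE1 /N -addn2 natrD. Qed.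

Lemma nm1 : ((n.-1)%:R : R) = N - 1.
Proof. by rewrite /N -{2}(prednK n_pos) -natr1 addrK. Qed.

Lemma dV0 : ((dV l d)%:~R : R) = 0.
Proof. by rewrite hd. Qed.

Lemma rmu k : (k <= l)%N -> ((d k)%:~R : R) = (r k)%:R * mk k.
Proof.
move=> hk; rewrite /mk /mu; field.
by rewrite lt0r_neq0 // r_pos.
Qed.

Lemma alpha0E c : alpha0 l r d c = P / (N * F) * (c * N).
Proof. by rewrite /alpha0 -/n fE0 dV0 subr0. Qed.

Lemma alpha1E c j : alpha1 l r d c j = P / ((N + 1) * (N * F)) * (r j)%:R * (c * (N + 1) - mk j).
Proof. by rewrite /alpha1 -/n fE1 dV0 subr0 /N -natr1. Qed.

Lemma alpha2E c j k : alpha2 l r d c j k =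
  P / ((N + 2) * ((N + 1) * (N * F))) * (r k)%:R *
    ((r j)%:R * (c * (N + 2) - mk j - mk k) + (j == k)%:R * (c * (N + 2) - 2 * mk k)).
Proof.
rewrite /alpha2 -/n fE2 dV0 subr0 /P /N /mk.
by case: eqP => [->|_]; rewrite -!natr1 /=; ring.
Qed.

Lemma beta0E c : beta0 l r d g c = P / F * ((N - 1) * N * c + 2 * (1 - g%:R)).
Proof. by rewrite /beta0 -/n -/F nm1 dV0 mulr0 subr0. Qed.

Lemma beta1E c j : beta1 l r d g c j =
  P * (r j)%:R / (N * F) * (N * (N - 1) * c + 2 * (1 - g%:R) - N * mk j).
Proof. by rewrite /beta1 -/n fE0 nm1 dV0 mul0r subr0. Qed.

Lemma sum_delta (k : nat) (a : nat -> R) : (2 <= k <= l)%N ->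
  \sum_(2 <= j < l.+1) (j == k)%:R * a j = a k.
Proof.
move=> hk; rewrite (bigD1_seq k); last by rewrite /index_iota iota_uniq.
  2: by rewrite mem_index_iota; lia.
rewrite eqxx mul1r big1 /= ?addr0 // => j /negPf ->; by rewrite mul0r.
Qed.

Section AtC.
Variables (c a0 : R) (a : nat -> R).
Hypotheses (hc : 1 < c) (hmu : forall k, (k <= l)%N -> `|mk k| < c).
Hypothesis (hsol : is_solution l r d g c a0 a).

Let S1 := \sum_(2 <= j < l.+1) a j * (r j)%:R.
Let S2 := \sum_(2 <= j < l.+1) a j * (d j)%:~R.
Let mu01 : R := (d 0%N + d 1%N)%:~R / (r 0%N + r 1%N)%:R.
Let Y := -4*N*(N+2) + 4*(N+2)*(1-g%:R)/c - 2*S1/N + (N+2)*S2/(N*(N+1)*c).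
Let X0 := 2*(N+1)*(N+2)*(N*(N-1)*c + 2*(1-g%:R)) - (N+2)*(N+1)*c*a0 - c*(N+2)*S1 + S2.
Let Y0 := -2*N*(N+1)*(N+2) + (N+2)*a0 + S1.
Let D k := c * (N + 2) - 2 * mk k.

Lemma S2E : S2 = \sum_(2 <= j < l.+1) a j * (r j)%:R * mk j.
Proof. by apply: eq_big_nat => j hj; rewrite rmu ?mulrA //; lia. Qed.

Lemma E0n : N*(N+1)*c*a0 + (N+1)*c*S1 - S2 = 2*N*(N+1)*((N-1)*N*c + 2*(1-g%:R)).
Proof.
have h0 := proj2 hsol.
rewrite alpha0E beta0E in h0.
have e : \sum_(2 <= j < l.+1) a j * alpha1 l r d c j =
    P / ((N + 1) * (N * F)) * ((N+1) * c * S1 - S2).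
  rewrite S2E mulrBr /S1 !mulr_sumr -sumrB; apply: eq_big_nat => j _.
  rewrite alpha1E; ring.
rewrite e in h0.
apply: (@eq_by _ _ _ _ _ (((N + 1) * (N * F)) / P) _ h0).
field; rewrite P_neq0 F_neq0 /=.
by rewrite Nn0 Nn1.
Qed.

Lemma rk_neq0 k : (k <= l)%N -> ((r k)%:R : R) != 0.
Proof. by move=> hk; rewrite lt0r_neq0 // r_pos. Qed.

Lemma Ekn k : (2 <= k <= l)%N -> a k * D k = X0 + mk k * Y0.
Proof.
move=> hk; have hkl : (k <= l)%N by lia.
have h := proj1 hsol k hk.
rewrite alpha1E beta1E in h.
set Q := P / ((N + 2) * ((N + 1) * (N * F))).
have e : \sum_(2 <= j < l.+1) a j * alpha2 l r d c j k =
   Q * (r k)%:R * ((N+2)*c*S1 - S2 - mk k * S1 + a k * (c*(N+2) - 2 * mk k)).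
  have -> : \sum_(2 <= j < l.+1) a j * alpha2 l r d c j k =
     \sum_(2 <= j < l.+1) ((Q * (r k)%:R * (c*(N+2) - mk k)) * (a j * (r j)%:R)
        + (- (Q * (r k)%:R)) * (a j * (r j)%:R * mk j)
        + (Q * (r k)%:R * (c*(N+2) - 2 * mk k)) * ((j == k)%:R * a j)).
    by apply: eq_big_nat => j _; rewrite alpha2E -/Q; ring.
  by rewrite sum_lin sum_delta // -S2E -/S1; ring.
rewrite e in h.
apply: (@eq_by _ _ _ _ _ (((N + 2) * ((N + 1) * (N * F))) / (P * (r k)%:R)) _ h).
rewrite /Q /D /X0 /Y0; field.
by rewrite Nn0 Nn1 Nn2 P_neq0 F_neq0 rk_neq0.
Qed.

Let RK : R := \sum_(2 <= k < l.+1) (r k)%:R.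
Let DK : R := \sum_(2 <= k < l.+1) (d k)%:~R.

Lemma SumK : (N+2)*c*S1 - 2*S2 = RK * X0 + DK * Y0.
Proof.
have e1 : \sum_(2 <= k < l.+1) (r k)%:R * (a k * D k) = (N+2)*c*S1 - 2*S2.
  have -> : \sum_(2 <= k < l.+1) (r k)%:R * (a k * D k) =
     \sum_(2 <= k < l.+1) (((N+2)*c) * (a k * (r k)%:R) + (-2) * (a k * (r k)%:R * mk k)
        + 0 * (0 : R)).
    by apply: eq_big_nat => k _; rewrite /D; ring.
  by rewrite sum_lin -S2E -/S1; ring.
rewrite -e1.
have -> : \sum_(2 <= k < l.+1) (r k)%:R * (a k * D k) =
   \sum_(2 <= k < l.+1) (X0 * (r k)%:R + Y0 * (d k)%:~R + 0 * (0 : R)).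
  apply: eq_big_nat => k hk; rewrite Ekn // rmu; last lia.
  ring.
by rewrite sum_lin -/RK -/DK; ring.
Qed.

Lemma NX0 : N * X0 = (N+2)*c*S1 - 2*S2.
Proof.
apply: (@eq_by _ _ _ _ _ (-(N+2)) _ E0n).
rewrite /X0; ring.
Qed.

Lemma RKE : RK = N - (r 0%N)%:R - (r 1%N)%:R.
Proof. by rewrite /N n_split !natrD natr_sum -/RK; ring. Qed.

Lemma DKE : DK = - ((d 0%N)%:~R + (d 1%N)%:~R).
Proof. have := d_split; rewrite -/DK => h; lra. Qed.

Lemma r01_pos : 0 < ((r 0%N + r 1%N)%N%:R : R).
Proof. by rewrite ltr0n; have := hr (leq0n l); lia. Qed.

Lemma X0E : X0 = - mu01 * Y0.
Proof.
have h := SumK; rewrite -NX0 RKE DKE in h.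
have hr01 := r01_pos.
rewrite /mu01 intrD; rewrite natrD in hr01 *.
apply: (@mulfI _ ((r 0%N)%:R + (r 1%N)%:R)); first by apply/eqP; lra.
have -> : ((r 0%N)%:R + (r 1%N)%:R) * (- (((d 0%N)%:~R + (d 1%N)%:~R) / ((r 0%N)%:R + (r 1%N)%:R)) * Y0)
   = - ((d 0%N)%:~R + (d 1%N)%:~R) * Y0.
  by field; apply/eqP; lra.
lra.
Qed.

Lemma YE : Y0 = Y.
Proof.
apply: (@eq_by _ _ _ _ _ ((N+2)/(N*(N+1)*c)) _ E0n).
rewrite /Y0 /Y; field.
have c0 : c != 0 by apply: lt0r_neq0; apply: lt_trans hc.
by rewrite Nn0 Nn1 c0.
Qed.

Lemma D_pos k : (k <= l)%N -> 0 < D k.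
Proof.
move=> hk; have h := hmu hk; have := ler_norm (mk k); have := N_pos => hN hm.
have hcN : 0 < c * N by apply: mulr_gt0 => //; apply: lt_trans hc.
rewrite /D; move: hcN hN h hm hc; generalize (mk k) N => m M; lra.
Qed.

Lemma ak_E k : (2 <= k <= l)%N -> a k = Y0 * ((mk k - mu01) * (D k)^-1).
Proof.
move=> hk; have hD := D_pos (k:=k); have hD0 : D k != 0 by apply/eqP; have := hD ltac:(lia); lra.
apply: (mulIf hD0); rewrite Ekn // X0E; field; done.
Qed.

Lemma core1 : S1 = Y * \sum_(2 <= k < l.+1) ((r k)%:R * (mk k - mu01)) * (D k)^-1.
Proof.
rewrite -YE /S1 mulr_sumr; apply: eq_big_nat => k hk.
rewrite ak_E //; ring.
Qed.

Lemma core2 : S2 = Y * \sum_(2 <= k < l.+1) ((r k)%:R * mk k * (mk k - mu01)) * (D k)^-1.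
Proof.
rewrite -YE S2E mulr_sumr; apply: eq_big_nat => k hk.
rewrite ak_E //; ring.
Qed.

Lemma core3 : 2*S2 - (N+2)*c*S1 = N*mu01*Y.
Proof.
rewrite -YE; have h := NX0; rewrite X0E in h.
have -> : N * mu01 * Y0 = - (N * (- mu01 * Y0)) by ring.
rewrite h; ring.
Qed.

End AtC.

End Core.

Lemma RI_weak (R : realType) (f : R -> R) : RI true f -> RI false f.
Proof. by move=> [p [q [p0 [_ h]]]]; exists p, q. Qed.

Lemma Wp_coef (R : realType) (p q : {poly R}) n i : (i <= n)%N -> (Wp p q n)`_i = ser p q i.
Proof. by move=> hi; rewrite Wp_poly coef_poly ltnS hi. Qed.

Lemma asymp_of_RI (R : realType) (f : R -> R) (p q : {poly R}) (M : R) : p`_0 != 0 -> q`_0 = 0 ->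
  (forall c, M < c -> p.[c^-1] * f c = q.[c^-1]) -> asymp_expansion f (ser p q).
Proof.
move=> p0 q0 h N.
have key := expansion p0 h N.
have s0 : ser p q 0 = 0 by rewrite /ser /= coefC /= q0 mul0r.
have E : forall c : R, (Wp p q N).[c^-1] = \sum_(1 <= i < N.+1) ser p q i / c ^+ i.
  move=> c; rewrite Wp_poly horner_poly -(big_mkord xpredT (fun i => ser p q i * c^-1 ^+ i)).
  rewrite big_ltn // s0 mul0r add0r; apply: eq_big_nat => i _; by rewrite exprVn.
have -> : (fun c => c ^+ N * (f c - \sum_(1 <= i < N.+1) ser p q i / c ^+ i)) =
          (fun c => c ^+ N * (f c - (Wp p q N).[c^-1])).
  by apply: funext => c; rewrite E.
exact: key.
Qed.

Arguments ser : simpl never.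
Arguments Wp : simpl never.

Lemma coef_lin2 (R : realType) (c0 c1 c2 : R) (W : {poly R}) j :
  ((c0%:P + c1 *: 'X + c2 *: 'X^2) * W)`_j =
  c0 * W`_j + c1 * (if j == 0%N then 0 else W`_j.-1) + c2 * (if (j < 2)%N then 0 else W`_(j - 2)).
Proof. by rewrite !mulrDl !coefD coefCM -!scalerAl !coefZ coefXM coefXnM. Qed.

Lemma coef_lin2' (R : realType) (c0 c1 c2 : R) j :
  (c0%:P + c1 *: 'X + c2 *: 'X^2)`_j = c0 * (j == 0%N)%:R + c1 * (j == 1%N)%:R + c2 * (j == 2%N)%:R.
Proof. by rewrite !coefD !coefZ coefC coefX coefXn; case: j => [|[|[|j]]] /=; ring. Qed.

Unset Implicit Arguments.

Theorem lemma3p17 (R : realType) (l : nat) (r : nat -> nat) (d : nat -> int)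
  (g : nat) (A0 : R -> R) (A : R -> nat -> R) :
  (2 <= l)%N ->
  (forall k, (k <= l)%N -> (1 <= r k)%N) ->
  dV l d = 0 ->
  (1 <= g)%N ->
  (forall c : R, (forall k, (k <= l)%N -> mu R r d k < c) ->
     solution_unique l r d g c /\ is_solution l r d g c (A0 c) (A c)) ->
  let rVR : R := (rV l r)%:R in
  let mu01 : R := (d 0%N + d 1%N)%:~R / (r 0%N + r 1%N)%:R in
  let S1 : R -> R := fun c => \sum_(2 <= j < l.+1) A c j * (r j)%:R in
  let S2 : R -> R := fun c => \sum_(2 <= j < l.+1) A c j * (d j)%:~R in
  exists u v : nat -> R,
    asymp_expansion S1 u /\ asymp_expansion S2 v /\
    u 1%N = 4 * rVR ^+ 2 * mu01 /\
    (rVR + 2) * u 2%N - 2 * mu01 * u 1%N - 2 * v 1%N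
      = 4 * (rVR + 2) * (g%:R - 1) * rVR * mu01 /\
    (forall i : nat, (1 <= i)%N ->
       (rVR + 2) * u i.+2 - 2 * mu01 * u i.+1 - 2 * v i.+1
         + (rVR + 2) / (rVR + 1) * mu01 * v i = 0).
Proof.
move=> hl hr hd hg hsol rVR mu01 S1 S2.
set M0 : R := 1 + \sum_(i < l.+1) `|mu R r d i|.
have hsum : forall k, (k <= l)%N -> `|mu R r d k| <= \sum_(i < l.+1) `|mu R r d i|.
  move=> k hk; rewrite (bigD1 (Ordinal (hk : (k < l.+1)%N))) //= lerDl.
  by apply: sumr_ge0.
have hM0 : forall c, M0 < c -> 1 < c /\ (forall k, (k <= l)%N -> `|mu R r d k| < c).
  move=> c hc; have h0 : 0 <= \sum_(i < l.+1) `|mu R r d i| by apply: sumr_ge0.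
  split; first by move: hc; rewrite /M0; lra.
  move=> k hk; apply: le_lt_trans (hsum k hk) _; move: hc h0; rewrite /M0; lra.
have hsolc : forall c, M0 < c -> is_solution l r d g c (A0 c) (A c).
  move=> c hc; apply: (proj2 (hsol c _)) => k hk.
  have [_ h] := hM0 c hc; exact: le_lt_trans (ler_norm _) (h k hk).
have NR0 : 0 < rVR by rewrite /rVR ltr0n (@n_pos _ _ d) //.
set Yf := fun c => -4 * rVR * (rVR + 2) + 4 * (rVR + 2) * (1 - g%:R) / c - 2 * S1 c / rVR
   + (rVR + 2) * S2 c / (rVR * (rVR + 1) * c).
set G1f := fun c => \sum_(2 <= k < l.+1) (r k)%:R * (mu R r d k - mu01) / (c * (rVR + 2) - 2 * mu R r d k).
set G2f := fun c => \sum_(2 <= k < l.+1) (r k)%:R * mu R r d k * (mu R r d k - mu01) / (c * (rVR + 2) - 2 * mu R r d k).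
have eS1 : forall c, M0 < c -> S1 c = Yf c * G1f c.
  move=> c hc; have [h1 h2] := hM0 c hc.
  exact: (core1 hl hr hd h1 h2 (hsolc c hc)).
have eS2 : forall c, M0 < c -> S2 c = Yf c * G2f c.
  move=> c hc; have [h1 h2] := hM0 c hc.
  exact: (core2 hl hr hd h1 h2 (hsolc c hc)).
have e3 : forall c, M0 < c -> 2 * S2 c - (rVR + 2) * c * S1 c = rVR * mu01 * Yf c.
  move=> c hc; have [h1 h2] := hM0 c hc.
  exact: (core3 hl hr hd h1 (hsolc c hc)).
have hA : 1 <= rVR + 2 by lra.
have RG1 : RI true G1f.
  apply: (@RI_sum R true (index_iota 2 l.+1)
    (fun k c => ((r k)%:R * (mu R r d k - mu01)) * (c * (rVR + 2) - 2 * mu R r d k)^-1)).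
  move=> k; exact: (RI_mul (RI_cst _) (@RI_lin R (rVR + 2) (2 * mu R r d k) hA)).
have RG2 : RI true G2f.
  apply: (@RI_sum R true (index_iota 2 l.+1)
    (fun k c => ((r k)%:R * mu R r d k * (mu R r d k - mu01)) * (c * (rVR + 2) - 2 * mu R r d k)^-1)).
  move=> k; exact: (RI_mul (RI_cst _) (@RI_lin R (rVR + 2) (2 * mu R r d k) hA)).
set Hf := fun c => 2 / rVR * G1f c + (- ((rVR + 2) / (rVR * (rVR + 1))) * c^-1) * G2f c.
have RH : RI true Hf.
  have R1 : RI true (fun c => 2 / rVR * G1f c) := RI_mul (RI_cst _) RG1.
  have R2 : RI true (fun c => (- ((rVR + 2) / (rVR * (rVR + 1))) * c^-1) * G2f c)
    := RI_mul (RI_mul (RI_cst _) (@RI_invc R)) RG2.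
  exact: (@RI_ext R true _ Hf 0 (RI_add R1 R2)).
set kf := fun c : R => -4 * rVR * (rVR + 2) + 4 * (rVR + 2) * (1 - g%:R) * c^-1.
have Rk : RI false kf.
  have R2 : RI true (fun c : R => 4 * (rVR + 2) * (1 - g%:R) * c^-1) := RI_mul (RI_cst _) (@RI_invc R).
  exact: (@RI_ext R false _ kf 0 (RI_add (RI_cst (-4 * rVR * (rVR + 2))) (RI_weak R2))).
have RY : RI false Yf.
  apply: (@RI_solve R false Hf kf Yf M0 RH Rk) => c hc.
  have hc1 : c != 0 by have [h1 _] := hM0 c hc; apply/eqP; lra.
  have ey : Yf c = -4 * rVR * (rVR + 2) + 4 * (rVR + 2) * (1 - g%:R) / c - 2 * (Yf c * G1f c) / rVR
   + (rVR + 2) * (Yf c * G2f c) / (rVR * (rVR + 1) * c).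
    by rewrite -eS1 // -eS2.
  apply: (@eq_by _ _ _ _ _ 1 _ ey).
  rewrite /Hf /kf; field.
  by rewrite hc1 lt0r_neq0 //=; apply/eqP; lra.
have RS1 : RI true S1.
  apply: (@RI_ext R true (fun c => Yf c * G1f c) S1 M0); first exact: (RI_mul RY RG1).
  by move=> c hc; rewrite eS1.
have RS2 : RI true S2.
  apply: (@RI_ext R true (fun c => Yf c * G2f c) S2 M0); first exact: (RI_mul RY RG2).
  by move=> c hc; rewrite eS2.
have [p1 [q1 [p10 [hz1 [M1 h1]]]]] := RS1.
have [p2 [q2 [p20 [hz2 [M2 h2]]]]] := RS2.
have q10 := hz1 isT; have q20 := hz2 isT.
exists (ser p1 q1), (ser p2 q2).
split; first exact: (asymp_of_RI p10 q10 h1).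
split; first exact: (asymp_of_RI p20 q20 h2).
set ka := (rVR + 2) / (rVR + 1).
set al := 4 * rVR ^+ 2 * (rVR + 2) * mu01.
set be := 4 * rVR * (rVR + 2) * (g%:R - 1) * mu01.
set pa : {poly R} := (rVR + 2)%:P + (- (2 * mu01)) *: 'X + 0 *: 'X^2.
set pb : {poly R} := 0%:P + (-2) *: 'X + (ka * mu01) *: 'X^2.
set pe : {poly R} := 0%:P + al *: 'X + be *: 'X^2.
have hfun : forall c, M0 < c -> pa.[c^-1] * S1 c + pb.[c^-1] * S2 c = pe.[c^-1].
  move=> c hc; have h := e3 c hc; rewrite /Yf /= in h.
  have hc1 : c != 0 by have [h1' _] := hM0 c hc; apply/eqP; lra.
  rewrite /pa /pb /pe !(hornerD, hornerN, hornerC, hornerZ, hornerX, hornerXn).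
  apply: (@eq_by _ _ _ _ _ (- c^-1) _ h).
  rewrite /ka /al /be; field.
  by rewrite hc1 lt0r_neq0 //=; apply/eqP; lra.
have hcr := coeff_rel p10 p20 h1 h2 hfun.
have u0 : ser p1 q1 0 = 0 by rewrite /ser /= coefC /= q10 mul0r.
have v0 : ser p2 q2 0 = 0 by rewrite /ser /= coefC /= q20 mul0r.
have cf : forall n j, (pa * Wp p1 q1 n + pb * Wp p2 q2 n - pe)`_j =
   (rVR + 2) * (Wp p1 q1 n)`_j + (- (2 * mu01)) * (if j == 0%N then 0 else (Wp p1 q1 n)`_j.-1)
   + 0 * (if (j < 2)%N then 0 else (Wp p1 q1 n)`_(j - 2))
   + (0 * (Wp p2 q2 n)`_j + (-2) * (if j == 0%N then 0 else (Wp p2 q2 n)`_j.-1)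
   + (ka * mu01) * (if (j < 2)%N then 0 else (Wp p2 q2 n)`_(j - 2)))
   - (0 * (j == 0%N)%:R + al * (j == 1%N)%:R + be * (j == 2%N)%:R).
  by move=> n j; rewrite coefB coefD coef_lin2 coef_lin2 coef_lin2'.
have c1 := hcr 1%N 1%N (leqnn _); rewrite cf !Wp_coef //= u0 v0 in c1.
have c2 := hcr 2%N 2%N (leqnn _); rewrite cf !Wp_coef //= v0 in c2.
have N2 : rVR + 2 != 0 by apply: lt0r_neq0; apply: ltr_pwDr.
split.
  apply: (@eq_by _ _ _ _ _ (1 / (rVR + 2)) _ c1).
  by rewrite /al; field.
split.
  apply: (@eq_by _ _ _ _ _ 1 _ c2).
  by rewrite /be; ring.
case=> [//|i] _.
have c3 := hcr i.+3 i.+3 (leqnn _); rewrite cf !Wp_coef ?leq_subr //= in c3.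
apply: (@eq_by _ _ _ _ _ 1 _ c3).
ring.
Qed.
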